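(* Let $F$ be a formal group law over a ring $R$ such that the $n$-series $[n]_F(t)\in R[[t]]$ is not a zero-divisor for any $n>0$. Then the GNS $s(n)=[n]_F(t)$ on $R[[t]]$ is Lucasian: $s(a+b)\equiv s(a)+s(b)\bmod s(a)s(b)$ for all $a,b\in\mathbf N$.
   Context: A generalized $n$-series (GNS) over a ring $D$ is a function $s\colon\mathbf N\to D$ with $s(0)=0$, $s(n)$ a non-zero-divisor for $n>0$, and $s(n-k)\mid s(n)-s(k)$ for all $n>k>0$. A GNS $s$ is Lucasian if $s(a+b)\equiv s(a)+s(b)\bmod s(a)s(b)$ for all $a,b$. Here $[n]_F(t)$ is the $n$-fold formal sum of $t$ with itself. *)

(* Defs.v *)
From HB Require Import structures.
From mathcomp Require Import all_boot all_order all_algebra.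
From mathcomp Require Import mpoly.
Set Implicit Arguments. Unset Strict Implicit. Unset Printing Implicit Defensive.
Import GRing.Theory.
Local Open Scope ring_scope.

(* Formal power series in k variables over R: coefficient functions on
   monomials.  Equality of series is pointwise equality of coefficients. *)
Definition series (k : nat) (R : comNzRingType) := 'X_{1..k} -> R.

Section Series.
Context (R : comNzRingType).

Definition strunc k (f : series k R) (d : nat) : {mpoly R[k]} :=
  \sum_(m : 'X_{1..k < d.+1}) f (val m) *: 'X_[val m].

Definition seq_series k (f g : series k R) := forall m, f m = g m.

Definition szero k : series k R := fun _ => 0.

Definition svar k (i : 'I_k) : series k R :=
  fun m => if m == U_(i)%MM then 1 else 0.

(* substitution F(G, H) of series G, H (with zero constant term) into a
   bivariate series F: the coefficient of m only depends on the truncations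
   to total degree mdeg m. *)
Definition scomp2 k (F : series 2 R) (G H : series k R) : series k R :=
  fun m => (strunc F (mdeg m) \mPo [tuple strunc G (mdeg m); strunc H (mdeg m)])@_m.

Definition smul k (f g : series k R) : series k R :=
  fun m => (strunc f (mdeg m) * strunc g (mdeg m))@_m.

Definition ssub k (f g : series k R) : series k R := fun m => f m - g m.

Definition sdvd k (a b : series k R) := exists c : series k R, seq_series b (smul c a).

Definition snzd k (a : series k R) :=
  forall g : series k R, seq_series (smul a g) (@szero k) -> seq_series g (@szero k).

(* One-dimensional commutative formal group law:
   F(x,y) = x + y + (terms of degree >= 2), F(x,y) = F(y,x),
   F(F(x,y),z) = F(x,F(y,z)). *)
Definition is_fgl (F : series 2 R) :=
  [/\ (forall m, (mdeg m <= 1)%N ->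
        F m = (if m == U_(ord0)%MM then 1 else 0) + (if m == U_(1 : 'I_2)%MM then 1 else 0)),
      seq_series (scomp2 F (svar 1) (svar 0)) F &
      seq_series (scomp2 F (scomp2 F (svar (0 : 'I_3)) (svar 1)) (svar 2))
                 (scomp2 F (svar 0) (scomp2 F (svar 1) (svar 2)))].

Fixpoint nseries (F : series 2 R) (n : nat) : series 1 R :=
  match n with
  | 0 => @szero 1
  | n'.+1 => scomp2 F (nseries F n') (svar ord0)
  end.

Definition is_GNS (s : nat -> series 1 R) :=
  [/\ seq_series (s 0%N) (@szero 1),
      (forall n, (0 < n)%N -> snzd (s n)) &
      (forall n k, (0 < k)%N -> (k < n)%N -> sdvd (s (n - k)%N) (ssub (s n) (s k)))].

Definition lucasian (s : nat -> series 1 R) :=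
  forall a b : nat, sdvd (smul (s a) (s b)) (ssub (ssub (s (a + b)%N) (s a)) (s b)).

End Series.

(* Main.v *)
Require Import Defs.
From HB Require Import structures.
From mathcomp Require Import all_boot all_order all_algebra.
From mathcomp Require Import mpoly.
From mathcomp Require Import zify ring.
Set Implicit Arguments. Unset Strict Implicit. Unset Printing Implicit Defensive.
Import GRing.Theory.
Local Open Scope ring_scope.


Section Low.
Context (R : comNzRingType) (k : nat).
Implicit Types (p q : {mpoly R[k]}).

Definition low (j : nat) p := forall m : 'X_{1..k}, (mdeg m < j)%N -> p@_m = 0.

Lemma low0 j : low j 0.
Proof. by move=> m _; rewrite mcoeff0. Qed.

Lemma lowD j p q : low j p -> low j q -> low j (p + q).
Proof. by move=> hp hq m hm; rewrite mcoeffD hp // hq // addr0. Qed.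

Lemma lowN j p : low j p -> low j (- p).
Proof. by move=> hp m hm; rewrite mcoeffN hp // oppr0. Qed.

Lemma lowB j p q : low j p -> low j q -> low j (p - q).
Proof. by move=> hp hq; apply: lowD => //; apply: lowN. Qed.

Lemma lowZ j c p : low j p -> low j (c *: p).
Proof. by move=> hp m hm; rewrite mcoeffZ hp // mulr0. Qed.

Lemma low_mono i j p : (i <= j)%N -> low j p -> low i p.
Proof. by move=> hij hp m hm; apply: hp; apply: leq_trans hij. Qed.

Lemma low_sum (I : Type) (r : seq I) (P : pred I) (F : I -> {mpoly R[k]}) j :
  (forall i, P i -> low j (F i)) -> low j (\sum_(i <- r | P i) F i).
Proof.
move=> h; apply: (big_ind (low j)) => //; [exact: low0 | exact: lowD].
Qed.

Lemma lowM i j p q : low i p -> low j q -> low (i + j) (p * q).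
Proof.
move=> hp hq m hm; rewrite mcoeffM big1 // => [[a b]] /= /eqP E.
have : (mdeg a + mdeg b < i + j)%N by rewrite -mdegD -E.
case: (ltnP (mdeg a) i) => [ha _|ha hb]; first by rewrite hp ?mul0r.
rewrite hq ?mulr0 //; lia.
Qed.

Lemma low_0 p : low 0 p.
Proof. by []. Qed.

Lemma lowMl i p q : low i p -> low i (p * q).
Proof. by move=> hp; rewrite -(addn0 i); apply: lowM. Qed.

Lemma lowMr i p q : low i q -> low i (p * q).
Proof. by move=> hq; rewrite -(add0n i); apply: lowM. Qed.

Lemma lowX i p n : low i p -> low (i * n) (p ^+ n).
Proof.
move=> hp; elim: n => [|n IH]; first by rewrite muln0.
by rewrite exprS mulnS; apply: lowM.
Qed.

Lemma low_prod (I : finType) (d : I -> nat) (F : I -> {mpoly R[k]}) :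
  (forall i, low (d i) (F i)) -> low (\sum_i d i) (\prod_i F i).
Proof.
move=> h; apply: (big_ind2 (fun n p => low n p)) => //.
by move=> ? ? ? ? ? ?; apply: lowM.
Qed.

Definition eqm (e : nat) p q := low e.+1 (p - q).

Lemma eqm_refl e p : eqm e p p.
Proof. by rewrite /eqm subrr; apply: low0. Qed.

Lemma eqm_sym e p q : eqm e p q -> eqm e q p.
Proof. by move=> h; rewrite /eqm -opprB; apply: lowN. Qed.

Lemma eqm_trans e p q r : eqm e p q -> eqm e q r -> eqm e p r.
Proof.
by move=> h1 h2; rewrite /eqm -(subrK q p) -addrA; apply: lowD.
Qed.

Lemma eqm_mono e e' p q : (e' <= e)%N -> eqm e p q -> eqm e' p q.
Proof. by move=> h; apply: low_mono. Qed.

Lemma eqm_coef e p q m : eqm e p q -> (mdeg m <= e)%N -> p@_m = q@_m.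
Proof.
by move=> h hm; apply/eqP; rewrite -subr_eq0 -mcoeffB h.
Qed.

Lemma eqmD e p p' q q' : eqm e p p' -> eqm e q q' -> eqm e (p + q) (p' + q').
Proof.
move=> h1 h2; rewrite /eqm (_ : _ - _ = (p - p') + (q - q')); first exact: lowD.
by rewrite opprD addrACA.
Qed.

Lemma eqmN e p p' : eqm e p p' -> eqm e (- p) (- p').
Proof. by move=> h; rewrite /eqm -opprD; apply: lowN. Qed.

Lemma eqmB e p p' q q' : eqm e p p' -> eqm e q q' -> eqm e (p - q) (p' - q').
Proof. by move=> h1 h2; apply: eqmD => //; apply: eqmN. Qed.

Lemma eqmZ e c p p' : eqm e p p' -> eqm e (c *: p) (c *: p').
Proof. by move=> h; rewrite /eqm -scalerBr; apply: lowZ. Qed.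

Lemma eqmM e p p' q q' : eqm e p p' -> eqm e q q' -> eqm e (p * q) (p' * q').
Proof.
move=> h1 h2; rewrite /eqm (_ : _ - _ = (p - p') * q + p' * (q - q')).
  by apply: lowD; [apply: lowMl | apply: lowMr].
by rewrite mulrBl mulrBr addrA subrK.
Qed.

Lemma eqmX e p p' n : eqm e p p' -> eqm e (p ^+ n) (p' ^+ n).
Proof.
move=> h; elim: n => [|n IH]; first exact: eqm_refl.
by rewrite !exprS; apply: eqmM.
Qed.

Lemma eqm_sum (I : Type) (r : seq I) (P : pred I) (F G : I -> {mpoly R[k]}) e :
  (forall i, P i -> eqm e (F i) (G i)) ->
  eqm e (\sum_(i <- r | P i) F i) (\sum_(i <- r | P i) G i).
Proof.
move=> h; apply: (big_ind2 (eqm e)) => //; [exact: eqm_refl | exact: eqmD].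
Qed.

Lemma eqm_prod (I : finType) (F G : I -> {mpoly R[k]}) e :
  (forall i, eqm e (F i) (G i)) -> eqm e (\prod_i F i) (\prod_i G i).
Proof.
move=> h; apply: (big_ind2 (eqm e)) => //; [exact: eqm_refl | exact: eqmM].
Qed.

Lemma low1_eqm e p q : eqm e p q -> low 1 q -> low 1 p.
Proof.
move=> h hq m hm; rewrite (eqm_coef h) ?hq //.
by move: hm; rewrite ltnS leqn0 => /eqP ->.
Qed.

End Low.


Section Comp.
Context (R : comNzRingType) (n k : nat).
Implicit Types (p q : {mpoly R[n]}) (qs rs : n.-tuple {mpoly R[k]}).

Lemma compX_low a qs (m : 'X_{1..n}) : (forall i, low a (tnth qs i)) ->
  low (mdeg m * a) ('X_[m] \mPo qs).
Proof.
move=> h; rewrite comp_mpolyX.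
have -> : (mdeg m * a = \sum_i (a * m i))%N.
  by rewrite mdegE big_distrl /=; apply: eq_bigr => i _; rewrite mulnC.
by apply: low_prod => i; apply: lowX.
Qed.

Lemma comp_low a j p qs : (forall i, low a (tnth qs i)) -> low j p ->
  low (j * a) (p \mPo qs).
Proof.
move=> h hp; rewrite comp_mpolyEX big_seq; apply: low_sum => m hm.
apply: lowZ; apply: (@low_mono _ _ _ (mdeg m * a)); last exact: compX_low m h.
rewrite leq_mul2r; apply/orP; right; rewrite leqNgt; apply/negP => lt.
by move: hm; rewrite mcoeff_msupp hp ?eqxx.
Qed.

Lemma comp_low1 j p qs : (forall i, low 1 (tnth qs i)) -> low j p ->
  low j (p \mPo qs).
Proof. by move=> h hp; rewrite -(muln1 j); apply: comp_low. Qed.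

Lemma eqm_comp e p p' qs qs' : eqm e p p' -> (forall i, low 1 (tnth qs i)) ->
  (forall i, eqm e (tnth qs i) (tnth qs' i)) -> eqm e (p \mPo qs) (p' \mPo qs').
Proof.
move=> hp h1 hq; apply: (@eqm_trans _ _ _ _ (p' \mPo qs)).
  by rewrite /eqm -comp_mpolyB; apply: comp_low1.
rewrite !comp_mpolyEX; apply: eqm_sum => m _; apply: eqmZ.
by rewrite !comp_mpolyX; apply: eqm_prod => i; apply: eqmX.
Qed.

Lemma comp_assoc (j : nat) p qs (rs : k.-tuple {mpoly R[j]}) :
  (p \mPo qs) \mPo rs = p \mPo [tuple (tnth qs i \mPo rs) | i < n].
Proof.
rewrite (comp_mpolyEX p qs) (comp_mpolyEX p) raddf_sum /=; apply: eq_bigr => m _.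
rewrite !comp_mpolyZ; congr (_ *: _); rewrite !comp_mpolyX rmorph_prod /=.
by apply: eq_bigr => i _; rewrite rmorphXn /= tnth_map tnth_ord_tuple.
Qed.

End Comp.


Lemma tnth2P (T : Type) (P : T -> T -> Prop) (a b a' b' : T) :
  P a a' -> P b b' -> forall i : 'I_2, P (tnth [tuple a; b] i) (tnth [tuple a'; b'] i).
Proof. by move=> ha hb [[|[|i]] hi] //. Qed.

Lemma tnth3P (T : Type) (P : T -> T -> Prop) (a b c a' b' c' : T) :
  P a a' -> P b b' -> P c c' ->
  forall i : 'I_3, P (tnth [tuple a; b; c] i) (tnth [tuple a'; b'; c'] i).
Proof. by move=> ha hb hc [[|[|[|i]]] hi] //. Qed.

Lemma tnth1P (T : Type) (P : T -> T -> Prop) (a a' : T) :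
  P a a' -> forall i : 'I_1, P (tnth [tuple a] i) (tnth [tuple a'] i).
Proof. by move=> ha [[|i] hi] //. Qed.

Lemma tnth2U (T : Type) (P : T -> Prop) (a b : T) :
  P a -> P b -> forall i : 'I_2, P (tnth [tuple a; b] i).
Proof. by move=> ha hb [[|[|i]] hi] //. Qed.

Lemma tnth3U (T : Type) (P : T -> Prop) (a b c : T) :
  P a -> P b -> P c -> forall i : 'I_3, P (tnth [tuple a; b; c] i).
Proof. by move=> ha hb hc [[|[|[|i]]] hi] //. Qed.

Lemma tnth1U (T : Type) (P : T -> Prop) (a : T) :
  P a -> forall i : 'I_1, P (tnth [tuple a] i).
Proof. by move=> ha [[|i] hi] //. Qed.

Section Ser.
Context (R : comNzRingType) (k : nat).
Implicit Types (f g : series k R) (p q : {mpoly R[k]}).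

Lemma coefT f d m : (strunc f d)@_m = if (mdeg m <= d)%N then f m else 0.
Proof.
case: ifP => hm; first by rewrite /strunc (mcoeff_mpoly f (m:=m) (k:=d.+1) hm).
rewrite /strunc raddf_sum big1 // => [[m' hm']] _ /=.
rewrite mcoeffZ mcoeffX; case: eqP => [E|_]; last by rewrite mulr0.
by move: hm'; rewrite E ltnS hm.
Qed.

Lemma eqmTP e f p : eqm e (strunc f e) p <-> (forall m, (mdeg m <= e)%N -> f m = p@_m).
Proof.
split=> [h m hm|h m hm].
  by rewrite -(eqm_coef h hm) coefT hm.
by rewrite mcoeffB coefT -ltnS hm h ?subrr // -ltnS.
Qed.

Lemma seqT f g d : seq_series f g -> strunc f d = strunc g d.
Proof. by move=> h; apply: eq_bigr => m _; rewrite h. Qed.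

Lemma eqm_Tmono d e f : (d <= e)%N -> eqm d (strunc f d) (strunc f e).
Proof.
move=> hde; apply/eqmTP => m hm; rewrite coefT (leq_trans hm hde) //.
Qed.

Definition z0 f := f 0%MM = 0.

Lemma low1T f e : z0 f -> low 1 (strunc f e).
Proof.
move=> h m; rewrite ltnS leqn0 mdeg_eq0 => /eqP ->.
by rewrite coefT; case: ifP => // _; exact: h.
Qed.

Lemma T_svar e (i : 'I_k) : eqm e (strunc (svar R i) e) 'X_i.
Proof.
apply/eqmTP => m _; rewrite mcoeffX /svar eq_sym.
by case: eqP.
Qed.

Lemma z0_svar (i : 'I_k) : z0 (svar R i).
Proof.
rewrite /z0 /svar; case: eqP => // /(congr1 mdeg).
by rewrite mdeg0 mdeg1.
Qed.

Lemma T_szero e : strunc (@szero R k) e = 0.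
Proof. by rewrite /strunc big1 // => m _; rewrite scale0r. Qed.

Lemma z0_szero : z0 (@szero R k).
Proof. by []. Qed.

Lemma seq_eqm f g : (forall e, eqm e (strunc f e) (strunc g e)) -> seq_series f g.
Proof.
move=> h m; have /eqmTP := h (mdeg m) => /(_ m (leqnn _)) ->.
by rewrite coefT leqnn.
Qed.

Lemma eqm_approx_mono d e f p : (d <= e)%N -> eqm e (strunc f e) p ->
  eqm d (strunc f d) p.
Proof.
move=> hde h; apply: eqm_trans (eqm_Tmono f hde) _; exact: eqm_mono h.
Qed.

Lemma smul_approx e f g p q : eqm e (strunc f e) p -> eqm e (strunc g e) q ->
  eqm e (strunc (smul f g) e) (p * q).
Proof.
move=> hf hg; apply/eqmTP => m hm; rewrite /smul.
apply: eqm_coef (leqnn _); apply: eqmM; [exact: eqm_approx_mono hm hf | exact: eqm_approx_mono hm hg].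
Qed.

Lemma ssub_approx e f g p q : eqm e (strunc f e) p -> eqm e (strunc g e) q ->
  eqm e (strunc (ssub f g) e) (p - q).
Proof.
move=> /eqmTP hf /eqmTP hg; apply/eqmTP => m hm.
by rewrite /ssub mcoeffB hf // hg.
Qed.

Definition sadd f g : series k R := fun m => f m + g m.
Definition sone : series k R := fun m => (m == 0%MM)%:R.

Lemma sadd_approx e f g p q : eqm e (strunc f e) p -> eqm e (strunc g e) q ->
  eqm e (strunc (sadd f g) e) (p + q).
Proof.
move=> /eqmTP hf /eqmTP hg; apply/eqmTP => m hm.
by rewrite /sadd mcoeffD hf // hg.
Qed.

Lemma sone_approx e : eqm e (strunc sone e) 1.
Proof. by apply/eqmTP => m hm; rewrite mcoeff1. Qed.

Lemma z0_approx e f p : eqm e (strunc f e) p -> low 1 p -> z0 f.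
Proof.
move=> /eqmTP h hp; have d0 : mdeg (0%MM : 'X_{1..k}) = 0%N by apply/eqP; rewrite mdeg_eq0.
by rewrite /z0 (h 0%MM) ?d0 // hp // d0.
Qed.

End Ser.

Lemma scomp2_approx (R : comNzRingType) (k : nat) e (F : series 2 R) (G H : series k R) P A B :
  eqm e (strunc F e) P -> eqm e (strunc G e) A -> eqm e (strunc H e) B ->
  z0 G -> z0 H ->
  eqm e (strunc (scomp2 F G H) e) (P \mPo [tuple A; B]).
Proof.
move=> hF hG hH zG zH; apply/eqmTP => m hm; rewrite /scomp2.
apply: eqm_coef (leqnn _); apply: eqm_comp.
- exact: eqm_approx_mono hm hF.
- by apply: tnth2U; apply: low1T.
- by apply: tnth2P; [apply: eqm_approx_mono hm hG | apply: eqm_approx_mono hm hH].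
Qed.


Lemma tuple2_map (T U : Type) (f : T -> U) (a b : T) :
  [tuple f (tnth [tuple a; b] i) | i < 2] = [tuple f a; f b].
Proof. by apply: eq_from_tnth => -[[|[|i]] hi]; rewrite tnth_mktuple. Qed.

Lemma tuple1_map (T U : Type) (f : T -> U) (a : T) :
  [tuple f (tnth [tuple a] i) | i < 1] = [tuple f a].
Proof. by apply: eq_from_tnth => -[[|i] hi]; rewrite tnth_mktuple. Qed.

Lemma lowX1 (R : comNzRingType) (k : nat) (i : 'I_k) : low 1 ('X_i : {mpoly R[k]}).
Proof.
move=> m; rewrite ltnS leqn0 mdeg_eq0 => /eqP ->; rewrite mcoeffX.
by case: eqP => // /(congr1 mdeg); rewrite mdeg1 mdeg0.
Qed.

Lemma comp_diff1 (R : comNzRingType) (k : nat) (p : {mpoly R[1]}) a b (q q' : {mpoly R[k]}) :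
  (1 <= a)%N -> low a p -> low b (q - q') -> low 1 q -> low 1 q' ->
  low (a + b - 1)%N ((p \mPo [tuple q]) - (p \mPo [tuple q'])).
Proof.
move=> ha hp hq l1 l2; rewrite (comp_mpolyEX p [tuple q]) (comp_mpolyEX p [tuple q']) -(sumrB (msupp p)) big_seq; apply: low_sum => m hm.
rewrite -scalerBr; apply: lowZ; rewrite !comp_mpolyX !big_ord1 !tnth0.
have hn : (a <= m ord0)%N.
  rewrite leqNgt; apply/negP => lt; move: hm; rewrite mcoeff_msupp hp ?eqxx //.
  by rewrite mdegE big_ord1.
rewrite subrXX; apply: (@low_mono _ _ _ (b + (m ord0).-1)); first lia.
apply: lowM => //; apply: low_sum => i _.
apply: (@low_mono _ _ _ ((m ord0).-1 - i + i)%N); first by move: (ltn_ord i); lia.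
by apply: lowM; rewrite -[X in low X _]mul1n; apply: lowX.
Qed.

Section FGL.
Context (R : comNzRingType) (F : series 2 R) (hF : is_fgl F).

Lemma zF : z0 F.
Proof.
case: hF => h1 _ _; rewrite /z0 h1; last by rewrite mdeg0.
by rewrite !(eq_sym 0%MM) !mnm1_eq0 addr0.
Qed.

Lemma lowP e : low 1 (strunc F e).
Proof. exact: low1T zF. Qed.

Local Notation P e := (strunc F e).

Lemma assoc3 e :
  eqm e (P e \mPo [tuple P e \mPo [tuple 'X_(0 : 'I_3); 'X_1]; 'X_2])
        (P e \mPo [tuple 'X_(0 : 'I_3); P e \mPo [tuple 'X_1; 'X_2]]).
Proof.
case: hF => _ _ h3.
have l2 : forall (a b : {mpoly R[3]}), low 1 a -> low 1 b -> low 1 (P e \mPo [tuple a; b]).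
  by move=> a b la lb; apply: comp_low1 (lowP e); apply: tnth2U.
have A1 := scomp2_approx (@eqm_refl _ _ e (P e)) (T_svar R (e:=e) (0 : 'I_3)) (T_svar R (e:=e) 1)
  (z0_svar _ _) (z0_svar _ _).
have A2 := scomp2_approx (@eqm_refl _ _ e (P e)) (T_svar R (e:=e) 1) (T_svar R (e:=e) (2 : 'I_3))
  (z0_svar _ _) (z0_svar _ _).
have L := scomp2_approx (@eqm_refl _ _ e (P e)) A1 (T_svar R (e:=e) 2)
  (z0_approx A1 (l2 _ _ (@lowX1 _ _ _) (@lowX1 _ _ _))) (z0_svar _ _).
have Rr := scomp2_approx (@eqm_refl _ _ e (P e)) (T_svar R (e:=e) 0) A2
  (z0_svar _ _) (z0_approx A2 (l2 _ _ (@lowX1 _ _ _) (@lowX1 _ _ _))).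
rewrite (seqT e h3) in L.
exact: eqm_trans (eqm_sym L) Rr.
Qed.

Lemma assocP k e (U V W : {mpoly R[k]}) : low 1 U -> low 1 V -> low 1 W ->
  eqm e (P e \mPo [tuple P e \mPo [tuple U; V]; W])
        (P e \mPo [tuple U; P e \mPo [tuple V; W]]).
Proof.
move=> lU lV lW.
have := eqm_comp (qs := [tuple U; V; W]) (qs' := [tuple U; V; W]) (@assoc3 e)
  (tnth3U lU lV lW) (tnth3P (@eqm_refl _ _ e U) (@eqm_refl _ _ e V) (@eqm_refl _ _ e W)).
by rewrite !comp_assoc !tuple2_map !comp_assoc !tuple2_map !comp_mpolyXU.
Qed.

Lemma commP k e (U V : {mpoly R[k]}) : low 1 U -> low 1 V ->
  eqm e (P e \mPo [tuple U; V]) (P e \mPo [tuple V; U]).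
Proof.
move=> lU lV; case: hF => _ h2 _.
have C := scomp2_approx (@eqm_refl _ _ e (P e)) (T_svar R (e:=e) (1 : 'I_2))
  (T_svar R (e:=e) 0) (z0_svar _ _) (z0_svar _ _).
rewrite (seqT e h2) in C.
have := eqm_comp (qs := [tuple U; V]) (qs' := [tuple U; V]) C
  (tnth2U lU lV) (tnth2P (@eqm_refl _ _ e U) (@eqm_refl _ _ e V)).
by rewrite !comp_assoc !tuple2_map !comp_mpolyXU.
Qed.

Lemma P01 e : (1 <= e)%N -> eqm 1 (P e) ('X_(0 : 'I_2) + 'X_1).
Proof.
move=> he; case: hF => h1 _ _.
apply: eqm_trans (eqm_sym (eqm_Tmono F he)) _.
apply/eqmTP => m hm; rewrite h1 // mcoeffD !mcoeffX ![(U_(_)%MM == m)]eq_sym.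
by case: (m == _); case: (m == _).
Qed.

Lemma unit1 e : eqm e (P e \mPo [tuple ('X_0 : {mpoly R[1]}); 0]) 'X_0.
Proof.
set Q := P e \mPo [tuple ('X_0 : {mpoly R[1]}); 0].
have l0 : forall j, low j (0 : {mpoly R[1]}) by move=> j; apply: low0.
have lX : low 1 ('X_0 : {mpoly R[1]}) by apply: lowX1.
have lQ : low 1 Q by apply: comp_low1 (lowP e); apply: tnth2U.
have hQQ : eqm e (Q \mPo [tuple Q]) Q.
  have A := @assocP _ e _ _ _ lX (l0 1%N) (l0 1%N).
  have Z : eqm e (P e \mPo [tuple 0; 0]) (0 : {mpoly R[1]}).
    rewrite /eqm subr0; have := comp_low (a := e.+1) (tnth2U (l0 e.+1) (l0 e.+1)) (lowP e).
    by rewrite mul1n.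
  have l00 : low 1 (P e \mPo [tuple (0 : {mpoly R[1]}); 0]).
    by apply: comp_low1 (lowP e); apply: tnth2U.
  have B : eqm e (P e \mPo [tuple 'X_0; P e \mPo [tuple 0; 0]]) Q.
    apply: eqm_comp; [exact: eqm_refl | exact: tnth2U | ].
    by apply: tnth2P; [exact: eqm_refl | exact: Z].
  have -> : Q \mPo [tuple Q] = P e \mPo [tuple Q; 0].
    by rewrite {1}/Q comp_assoc tuple2_map comp_mpolyXU comp_mpoly0.
  exact: eqm_trans A B.
have key : forall j, (j <= e)%N -> eqm j Q 'X_0.
  elim => [_|j IH hj].
    by rewrite /eqm; apply: lowB.
  case: j IH hj => [_ h1|j IH hj].
    have := eqm_comp (qs := [tuple ('X_0 : {mpoly R[1]}); 0]) (qs' := [tuple ('X_0 : {mpoly R[1]}); 0])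
      (P01 h1) (tnth2U lX (l0 1%N)) (tnth2P (@eqm_refl _ _ 1 'X_0) (@eqm_refl _ _ 1 0)).
    by rewrite comp_mpolyD !comp_mpolyXU /= addr0.
  have IH' := IH (ltnW hj).
  set D := Q - 'X_0.
  have hD : low j.+2 D := IH'.
  have h2 : low 2 (Q - 'X_0) by apply: (eqm_mono _ IH').
  have hc := comp_diff1 (a := j.+2) (b := 2) (p := D) (q := Q) (q' := 'X_0) (isT) hD h2 lQ lX.
  have e1 : D \mPo [tuple 'X_0] = D.
    rewrite -[RHS]comp_mpoly_id; congr (_ \mPo _).
    by apply: eq_from_tnth => i; rewrite tnth_mktuple (ord1 i).
  have EQ : Q = 'X_0 + D by rewrite /D addrC subrK.
  have e2 : Q \mPo [tuple Q] = Q + (D \mPo [tuple Q]).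
    transitivity (('X_0 + D) \mPo [tuple Q]); first by rewrite -EQ.
    transitivity (('X_0 + D) \mPo [tuple Q]); first by rewrite -EQ.
    by rewrite comp_mpolyD comp_mpolyXU.
  have h3 : low j.+3 (D \mPo [tuple Q]).
    have := eqm_mono hj hQQ; rewrite /eqm e2.
    by rewrite addrAC subrr add0r.
  rewrite /eqm -/D.
  have -> : D = (D \mPo [tuple Q]) - ((D \mPo [tuple Q]) - (D \mPo [tuple 'X_0])).
    by rewrite e1 subKr.
  apply: lowB => //.
  by move: hc; rewrite (_ : (j.+2 + 2 - 1 = j.+3)%N) //; lia.
exact: key.
Qed.

Lemma unitU k e (U : {mpoly R[k]}) : low 1 U -> eqm e (P e \mPo [tuple U; 0]) U.
Proof.
move=> lU.
have := eqm_comp (qs := [tuple U]) (qs' := [tuple U]) (@unit1 e) (tnth1U lU)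
  (tnth1P (@eqm_refl _ _ e U)).
by rewrite comp_assoc tuple2_map comp_mpolyXU comp_mpoly0.
Qed.

Lemma unit0U k e (U : {mpoly R[k]}) : low 1 U -> eqm e (P e \mPo [tuple 0; U]) U.
Proof.
move=> lU; apply: eqm_trans (@unitU _ e _ lU); apply: commP => //; exact: low0.
Qed.

End FGL.


Lemma mnm2P (a m : 'X_{1..2}) : a 0 = m 0 -> a 1 = m 1 -> a = m.
Proof.
move=> h0 h1; apply/mnmP => -[[|[|j]] hj] //.
- by rewrite (_ : Ordinal hj = 0) //; apply: val_inj.
- by rewrite (_ : Ordinal hj = 1) //; apply: val_inj.
Qed.

Definition u1 (x : nat) : 'X_{1..1} := (U_(@ord0 0) *+ x)%MM.

Lemma U1eq (x y : nat) : (u1 x == u1 y) = (x == y).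
Proof.
apply/eqP/eqP => [h|->] //.
by have := congr1 (fun m : 'X_{1..1} => m 0) h; rewrite !mulmnE !mnm1E eqxx !mul1n.
Qed.

Lemma mdegU1 (x : nat) : mdeg (u1 x) = x.
Proof. by rewrite mdegMn mdeg1 mul1n. Qed.

Section Coef.
Context (R : comNzRingType).

Lemma coef_via_X (p : {mpoly R[2]}) (f : 'X_{1..2} -> R) m :
  (forall a, f a = (a == m)%:R) -> \sum_(a <- msupp p) p@_a * f a = p@_m.
Proof.
move=> hf; rewrite [in RHS](mpolyE p) raddf_sum /=; apply: eq_bigr => a _.
by rewrite mcoeffZ mcoeffX hf.
Qed.

Lemma compX2 k (a : 'X_{1..2}) (x y : {mpoly R[k]}) :
  'X_[a] \mPo [tuple x; y] = x ^+ (a 0) * y ^+ (a 1).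
Proof.
rewrite comp_mpolyX big_ord_recl big_ord1.
by rewrite (_ : lift ord0 ord0 = 1 :> 'I_2) //; apply: val_inj.
Qed.

Lemma axis0 (p : {mpoly R[2]}) (m : 'X_{1..2}) : m 1 = 0%N ->
  p@_m = (p \mPo [tuple ('X_0 : {mpoly R[1]}); 0])@_(u1 (m 0)).
Proof.
move=> hm; rewrite comp_mpolyEX raddf_sum /=.
symmetry; under eq_bigr => a _ do rewrite mcoeffZ.
apply: coef_via_X => a; rewrite compX2.
case: (posnP (a 1)) => ha.
  rewrite ha expr0 mulr1 mpolyXn mcoeffX -/(u1 _) U1eq.
  congr ((nat_of_bool _)%:R); apply/idP/idP => [/eqP h|/eqP ->] //.
  by apply/eqP; apply: mnm2P => //; rewrite ha hm.
rewrite expr0n (gtn_eqF ha) mulr0 mcoeff0; case: eqP => // h.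
by move: ha; rewrite h hm.
Qed.

Lemma axis1 (p : {mpoly R[2]}) (m : 'X_{1..2}) : m 0 = 0%N ->
  p@_m = (p \mPo [tuple 0; ('X_0 : {mpoly R[1]})])@_(u1 (m 1)).
Proof.
move=> hm; rewrite comp_mpolyEX raddf_sum /=.
symmetry; under eq_bigr => a _ do rewrite mcoeffZ.
apply: coef_via_X => a; rewrite compX2.
case: (posnP (a 0)) => ha.
  rewrite ha expr0 mul1r mpolyXn mcoeffX -/(u1 _) U1eq.
  congr ((nat_of_bool _)%:R); apply/idP/idP => [/eqP h|/eqP ->] //.
  by apply/eqP; apply: mnm2P => //; rewrite ha hm.
rewrite expr0n (gtn_eqF ha) mul0r mcoeff0; case: eqP => // h.
by move: ha; rewrite h hm.
Qed.

Lemma coefMX_nle k (p : {mpoly R[k]}) u m : ~~ (u <= m)%MM -> (p * 'X_[u])@_m = 0.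
Proof.
move=> hu; rewrite mcoeffM big1 // => -[a b] /= /eqP E.
rewrite mcoeffX; case: eqP => [hb|]; last by rewrite mulr0.
have : (u <= m)%MM by rewrite E hb lem_addl.
by rewrite (negbTE hu).
Qed.

End Coef.


Definition i0 : 'I_2 := 0.
Definition i1 : 'I_2 := 1.
Definition u01 : 'X_{1..2} := (U_(i0) + U_(i1))%MM.

Lemma U0m (m : 'X_{1..2}) : (U_(i0)%MM == m) = (m 0 == 1%N) && (m 1 == 0%N).
Proof.
apply/eqP/andP => [<-|[/eqP h0 /eqP h1]]; first by rewrite !mnm1E.
by apply: mnm2P; rewrite mnm1E.
Qed.

Lemma U1m (m : 'X_{1..2}) : (U_(i1)%MM == m) = (m 0 == 0%N) && (m 1 == 1%N).
Proof.
apply/eqP/andP => [<-|[/eqP h0 /eqP h1]]; first by rewrite !mnm1E.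
by apply: mnm2P; rewrite mnm1E.
Qed.

Lemma X0coef (R : comNzRingType) x : ('X_0 : {mpoly R[1]})@_(u1 x) = (x == 1%N)%:R.
Proof.
have -> : U_(@ord0 0)%MM = u1 1 by apply/mnmP => i; rewrite mulmnE muln1.
by rewrite mcoeffX U1eq eq_sym.
Qed.

Lemma eqm_coefP (R : comNzRingType) k e (p q : {mpoly R[k]}) :
  (forall m, (mdeg m <= e)%N -> p@_m = q@_m) -> eqm e p q.
Proof. by move=> h m hm; rewrite mcoeffB h ?subrr. Qed.

Section Main.
Context (R : comNzRingType) (F : series 2 R) (hF : is_fgl F).
Local Notation P e := (strunc F e).

Definition Gs : series 2 R := fun m => F (m + u01)%MM.

Lemma decomp e : eqm e (P e) ('X_i0 + 'X_i1 + 'X_i0 * 'X_i1 * strunc Gs e).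
Proof.
apply: eqm_coefP => m hm.
rewrite coefT hm !mcoeffD !mcoeffX (mulrC ('X_i0 * _)) -mpolyXD -/u01.
case h: (u01 <= m)%MM.
  have [m' Em] : exists m', m = (u01 + m')%MM.
    by exists (m - u01)%MM; rewrite addmC submK.
  subst m; rewrite mcoeffMX coefT.
  have -> : (mdeg m' <= e)%N by move: hm; rewrite mdegD; lia.
  rewrite /Gs addmC U0m U1m !mnmDE !mnm1E /=.
  by rewrite add0n addn0 !addn1 /= andbF /= !add0r.
rewrite coefMX_nle ?h // addr0 U0m U1m.
have FP : F m = (P e)@_m by rewrite coefT hm.
case: (posnP (m 1)) => h1.
  rewrite h1 /= andbT andbF addr0.
  rewrite FP (axis0 _ h1).
  rewrite (eqm_coef (@unit1 _ _ hF e) _); last by rewrite mdegU1 (leq_trans _ hm) // mdegE big_ord_recl leq_addr.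
  by rewrite X0coef.
case: (posnP (m 0)) => h0.
  rewrite h0 /= add0r.
  rewrite FP (axis1 _ h0).
  rewrite (eqm_coef (@unit0U _ _ hF _ e 'X_0 (@lowX1 _ _ _)) _); last first.
    rewrite mdegU1 (leq_trans _ hm) // mdegE big_ord_recl big_ord1.
    by rewrite (_ : lift ord0 ord0 = 1 :> 'I_2) ?leq_addl //; apply: val_inj.
  by rewrite X0coef.
exfalso; move/negbT: h => /negP; apply; apply/mnm_lepP => -[[|[|j]] hj] //.
- rewrite (_ : Ordinal hj = 0); last by apply: val_inj.
  by rewrite mnmDE !mnm1E.
- rewrite (_ : Ordinal hj = 1); last by apply: val_inj.
  by rewrite mnmDE !mnm1E.
Qed.

Local Notation S := (nseries F).

Lemma z0_scomp2 k (G H : series k R) : z0 G -> z0 H -> z0 (scomp2 F G H).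
Proof.
move=> zG zH.
have A := scomp2_approx (@eqm_refl _ _ 0 (P 0)) (@eqm_refl _ _ 0 (strunc G 0))
  (@eqm_refl _ _ 0 (strunc H 0)) zG zH.
apply: z0_approx A _; apply: comp_low1 (lowP hF 0).
by apply: tnth2U; apply: low1T.
Qed.

Lemma zS n : z0 (S n).
Proof.
elim: n => [|n IH] //=; apply: z0_scomp2 => //; exact: z0_svar.
Qed.

Lemma scT k e (G H : series k R) : z0 G -> z0 H ->
  eqm e (strunc (scomp2 F G H) e) (P e \mPo [tuple strunc G e; strunc H e]).
Proof. by move=> zG zH; apply: scomp2_approx => //; apply: eqm_refl. Qed.

Lemma S1 a b : seq_series (S (a + b)) (scomp2 F (S a) (S b)).
Proof.
elim: b => [|b IH].
  rewrite addn0; apply: seq_eqm => e; apply: eqm_sym.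
  apply: eqm_trans (@scT _ e _ _ (zS a) (zS 0)) _.
  rewrite /= T_szero; apply: unitU => //; exact: low1T _ (zS a).
rewrite addnS /=; apply: seq_eqm => e.
have lA := low1T e (zS a); have lB := low1T e (zS b).
have lX : low 1 ('X_0 : {mpoly R[1]}) by apply: lowX1.
have L : eqm e (strunc (scomp2 F (S (a + b)) (svar R ord0)) e)
    (P e \mPo [tuple P e \mPo [tuple strunc (S a) e; strunc (S b) e]; 'X_0]).
  apply: scomp2_approx; [exact: eqm_refl | | exact: T_svar | exact: zS | exact: z0_svar].
  by rewrite (seqT e IH); apply: scT; apply: zS.
have Rr : eqm e (strunc (scomp2 F (S a) (scomp2 F (S b) (svar R ord0))) e)
    (P e \mPo [tuple strunc (S a) e; P e \mPo [tuple strunc (S b) e; 'X_0]]).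
  apply: scomp2_approx; [exact: eqm_refl | exact: eqm_refl | | exact: zS | ].
    apply: scomp2_approx; [exact: eqm_refl | exact: eqm_refl | exact: T_svar | exact: zS | exact: z0_svar].
  by apply: z0_scomp2; [exact: zS | exact: z0_svar].
apply: eqm_trans L _; apply: eqm_trans _ (eqm_sym Rr).
exact: assocP.
Qed.

Lemma key_approx a b e :
  eqm e (strunc (S (a + b)) e)
    (strunc (S a) e + strunc (S b) e + strunc (S a) e * strunc (S b) e *
      (strunc Gs e \mPo [tuple strunc (S a) e; strunc (S b) e])).
Proof.
have lA := low1T e (zS a); have lB := low1T e (zS b).
rewrite (seqT e (S1 a b)); apply: eqm_trans (@scT _ e _ _ (zS a) (zS b)) _.
have := eqm_comp (qs := [tuple strunc (S a) e; strunc (S b) e])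
  (qs' := [tuple strunc (S a) e; strunc (S b) e]) (@decomp e) (tnth2U lA lB)
  (tnth2P (@eqm_refl _ _ e _) (@eqm_refl _ _ e _)).
by rewrite !comp_mpolyD !rmorphM /= !comp_mpolyXU.
Qed.

End Main.


Theorem lemma5p10 (R : comNzRingType) (F : series 2 R) :
  is_fgl F ->
  (forall n : nat, (0 < n)%N -> snzd (nseries F n)) ->
  is_GNS (nseries F) /\ lucasian (nseries F).
Proof.
move=> hF hnz; split.
  split => //.
  move=> n k hk hkn.
  exists (sadd (@sone R 1) (smul (nseries F k) (scomp2 (Gs F) (nseries F (n - k)) (nseries F k)))).
  apply: seq_eqm => e.
  have K := key_approx hF (n - k) k (e := e); rewrite subnK ?(ltnW hkn) // in K.
  set A := strunc (nseries F (n - k)) e in K *.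
  set B := strunc (nseries F k) e in K *.
  set C := strunc (Gs F) e \mPo [tuple A; B] in K *.
  have H2 : eqm e (strunc (smul (sadd (@sone R 1) (smul (nseries F k)
       (scomp2 (Gs F) (nseries F (n - k)) (nseries F k)))) (nseries F (n - k))) e)
       ((1 + B * C) * A).
    apply: smul_approx; last exact: eqm_refl.
    apply: sadd_approx; first exact: sone_approx.
    apply: smul_approx; first exact: eqm_refl.
    by apply: scomp2_approx; (try exact: eqm_refl); exact: zS.
  apply: eqm_trans (ssub_approx K (@eqm_refl _ _ e B)) _.
  apply: eqm_trans _ (eqm_sym H2).
  have -> : A + B + A * B * C - B = (1 + B * C) * A by ring.
  exact: eqm_refl.
move=> a b; exists (scomp2 (Gs F) (nseries F a) (nseries F b)).
apply: seq_eqm => e.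
have K := key_approx hF a b (e := e).
set A := strunc (nseries F a) e in K *.
set B := strunc (nseries F b) e in K *.
set C := strunc (Gs F) e \mPo [tuple A; B] in K *.
have H2 : eqm e (strunc (smul (scomp2 (Gs F) (nseries F a) (nseries F b))
     (smul (nseries F a) (nseries F b))) e) (C * (A * B)).
  apply: smul_approx; last by apply: smul_approx; exact: eqm_refl.
  by apply: scomp2_approx; (try exact: eqm_refl); exact: zS.
apply: eqm_trans (ssub_approx (ssub_approx K (@eqm_refl _ _ e A)) (@eqm_refl _ _ e B)) _.
apply: eqm_trans _ (eqm_sym H2).
have -> : A + B + A * B * C - A - B = C * (A * B) by ring.
exact: eqm_refl.
Qed.
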